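(* Assume $L_1\subseteq\bigcup_{\alpha\in\Sigma^\kappa}\Sigma^*\alpha\Sigma^*\bar\alpha$ and $L_2\subseteq\bigcup_{\alpha\in\Sigma^\kappa}\alpha\Sigma^*\bar\alpha\Sigma^*$. Let $M=\mathcal{I}\times\mathcal{F}$ where $\mathcal{I},\mathcal{F}$ are the initial and final states of $\mathcal{A}$; for $\mu=(I,F)\in M$ with $F=((d_1,d_2),e_1,e_2,\kappa)$ let $R_\mu$ be the set of labels of paths in $\mathcal{A}$ from $I$ to $F$ and $B_\mu=B(d_1,d_2,e_1,e_2)$. Let $\sigma=\max_{\mu\in M}\lambda_{B_\mu}$, $\rho=\max_{\mu\in M}\lambda_{R_\mu}$, and $\eta=\lambda_{\mathcal{H}_\kappa(L_1,L_2)}$. Then $\eta=\max\{\sigma,\sqrt\rho\}$.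
   Context: $\Sigma$ is a finite alphabet with at least two letters with an involution $a\mapsto\bar a$ ($\bar{\bar a}=a$), extended to words by $\overline{a_1\cdots a_m}=\bar a_m\cdots\bar a_1$ and to languages elementwise. $\kappa$ is a fixed positive integer. $\mathcal{H}_\kappa(L_1,L_2)=\{\gamma\alpha\beta\bar\alpha\bar\gamma:|\alpha|\ge\kappa,\ \gamma\alpha\beta\bar\alpha\in L_1\text{ or }\alpha\beta\bar\alpha\bar\gamma\in L_2\}$. $L_1,L_2$ are regular; $\mathcal{A}_1=(Q_1,\Sigma,E_1,\{q_{01}\},F_1)$ is a complete DFA accepting $L_1$, $\mathcal{A}_2=(Q_2,\Sigma,E_2,\{q_{02}\},F_2)$ a complete DFA accepting $\overline{L_2}$; $p\cdot w$ is the state reached from $p$ on $w$. Growth indicator: $\lambda_L=\inf\{\lambda\ge0:\exists c>0\ \forall m: |L\cap\Sigma^m|\le c\lambda^m\}$. Construction of $\mathcal{A}$: $Q_{12}=\{(q_{01}\cdot w,q_{02}\cdot w):w\in\Sigma^*\}$ with $(p_1,p_2)\cdot w=(p_1\cdot w,p_2\cdot w)$. For $(p_1,p_2,q_1,q_2)\in Q_1\times Q_2\times Q_1\times Q_2$ let $B(p_1,p_2,q_1,q_2)=\{w:p_1\cdot w=q_1,\ p_2\cdot\bar w=q_2\}$; the quadruple is a basic bridge if this set is nonempty. States of $\mathcal{A}$ are all $((p_1,p_2),q_1,q_2,\ell)$ with $(p_1,p_2)\in Q_{12}$, $q_i\in Q_i$, $\ell\in\{0,\dots,\kappa\}$, $(p_1,p_2,q_1,q_2)$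 a basic bridge. For $a\in\Sigma$, $P\in Q_{12}$, $q_i\in Q_i$, there is an $a$-arc from $(P,q_1\cdot\bar a,q_2\cdot\bar a,\ell)$ to $(P\cdot a,q_1,q_2,\ell')$, provided both are states, exactly when: $\ell=\ell'=0$ and $q_1\cdot\bar a\notin F_1$, $q_2\cdot\bar a\notin F_2$; or $\ell=0,\ell'=1$ and ($q_1\cdot\bar a\in F_1$ or $q_2\cdot\bar a\in F_2$); or $1\le\ell<\kappa$ and $\ell'=\ell+1$. Initial states: $((q_{01},q_{02}),q_1',q_2',0)$; final states: those with $\ell=\kappa$. $\mathcal{A}$ is trimmed: states not reachable from an initial state, or from which no final state is reachable, are removed. *)

(* Defs.v *)
From HB Require Import structures.
From mathcomp Require Import all_boot all_order all_algebra.
From mathcomp Require Import boolp classical_sets reals.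
Set Implicit Arguments. Unset Strict Implicit. Unset Printing Implicit Defensive.
Import Order.TTheory GRing.Theory Num.Theory.
Local Open Scope ring_scope.

Section Words.
Variable S : finType.
Variable bar : S -> S.

Definition wbar (w : seq S) : seq S := rev (map bar w).

Definition ncount (L : set (seq S)) (m : nat) : nat :=
  #|[set t : m.-tuple S | `[< L (tval t) >]]|.

Definition growth (R : realType) (L : set (seq S)) : R :=
  inf [set l : R | 0 <= l /\
        exists c : R, 0 < c /\ forall m : nat, (ncount L m)%:R <= c * l ^+ m].

Definition Hk (kappa : nat) (L1 L2 : set (seq S)) : set (seq S) :=
  [set w | exists gamma alpha beta : seq S,
     w = gamma ++ alpha ++ beta ++ wbar alpha ++ wbar gamma /\
     (kappa <= size alpha)%N /\
     (L1 (gamma ++ alpha ++ beta ++ wbar alpha) \/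
      L2 (alpha ++ beta ++ wbar alpha ++ wbar gamma))].
End Words.

Definition dstar (S Q : Type) (d : Q -> S -> Q) (p : Q) (w : seq S) : Q :=
  foldl d p w.

Section Construction.
Variables (S : finType) (bar : S -> S).
Variables (Q1 Q2 : finType) (d1 : Q1 -> S -> Q1) (d2 : Q2 -> S -> Q2).
Variables (q01 : Q1) (q02 : Q2) (F1 : {set Q1}) (F2 : {set Q2}).
Variable kappa : nat.

Definition St : finType := ((Q1 * Q2) * Q1 * Q2 * 'I_kappa.+1)%type.
Definition stP (x : St) : Q1 * Q2 := x.1.1.1.
Definition stq1 (x : St) : Q1 := x.1.1.2.
Definition stq2 (x : St) : Q2 := x.1.2.
Definition stl (x : St) : nat := x.2.

Definition inQ12 (P : Q1 * Q2) : Prop :=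
  exists w : seq S, P = (dstar d1 q01 w, dstar d2 q02 w).

Definition Bset (p1 : Q1) (p2 : Q2) (q1 : Q1) (q2 : Q2) : set (seq S) :=
  [set w | dstar d1 p1 w = q1 /\ dstar d2 p2 (wbar bar w) = q2].

Definition basic_bridge p1 p2 q1 q2 : Prop := exists w, Bset p1 p2 q1 q2 w.

Definition isState (x : St) : Prop :=
  inQ12 (stP x) /\ basic_bridge (stP x).1 (stP x).2 (stq1 x) (stq2 x).

Definition arc (x : St) (a : S) (y : St) : Prop :=
  isState x /\ isState y /\
  stP y = (d1 (stP x).1 a, d2 (stP x).2 a) /\
  stq1 x = d1 (stq1 y) (bar a) /\ stq2 x = d2 (stq2 y) (bar a) /\
  [\/ [/\ stl x = 0%N, stl y = 0%N, stq1 x \notin F1 & stq2 x \notin F2],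
      [/\ stl x = 0%N, stl y = 1%N & (stq1 x \in F1) || (stq2 x \in F2)]
    | [/\ (1 <= stl x)%N, (stl x < kappa)%N & stl y = (stl x).+1]].

Definition initialS (x : St) : Prop :=
  isState x /\ stP x = (q01, q02) /\ stl x = 0%N.

Definition finalS (x : St) : Prop := isState x /\ stl x = kappa.

Fixpoint run (ar : St -> S -> St -> Prop) (x : St) (w : seq S) (y : St)
  : Prop :=
  match w with
  | [::] => x = y
  | a :: w' => exists z, ar x a z /\ run ar z w' y
  end.

Definition accessible (x : St) : Prop :=
  exists i w, initialS i /\ run arc i w x.
Definition coaccessible (x : St) : Prop :=
  exists f w, finalS f /\ run arc x w f.
Definition useful (x : St) : Prop := accessible x /\ coaccessible x.

Definition arcA (x : St) (a : S) (y : St) : Prop :=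
  useful x /\ useful y /\ arc x a y.
Definition initialA (x : St) : Prop := useful x /\ initialS x.
Definition finalA (x : St) : Prop := useful x /\ finalS x.

Definition inM (mu : St * St) : Prop := initialA mu.1 /\ finalA mu.2.

Definition Rmu (mu : St * St) : set (seq S) :=
  [set w | run arcA mu.1 w mu.2].

Definition Bmu (mu : St * St) : set (seq S) :=
  Bset (stP mu.2).1 (stP mu.2).2 (stq1 mu.2) (stq2 mu.2).

(* max over M (0 if M is empty; all growth indicators are >= 0) *)
Definition maxM (R : realType) (f : St * St -> R) : R :=
  \big[Num.max/0]_(mu : St * St | `[< inM mu >]) f mu.

End Construction.

Arguments wbar : clear implicits.
Arguments growth : clear implicits.
Arguments Hk : clear implicits.
Arguments Bmu : clear implicits.
Arguments Rmu : clear implicits.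
Arguments maxM : clear implicits.

(* Main.v *)
Require Import Defs.
From HB Require Import structures.
From mathcomp Require Import all_boot all_order all_algebra.
From mathcomp Require Import boolp classical_sets reals.
From mathcomp Require Import zify ring lra.
Import Order.TTheory GRing.Theory Num.Theory.

Set Implicit Arguments. Unset Strict Implicit.

Section GrowthFacts.
Local Open Scope ring_scope. Local Open Scope classical_set_scope.
Variables (R : realType) (S : finType).
Implicit Types (L : set (seq S)).

Definition Gset L : set R := [set l : R | 0 <= l /\
        exists c : R, 0 < c /\ forall m : nat, (ncount L m)%:R <= c * l ^+ m].

Lemma ncount_le L m : (ncount L m <= #|S| ^ m)%N.
Proof.
rewrite /ncount -card_tuple.
exact: max_card.
Qed.

Lemma Gset_ne L : Gset L !=set0.
Proof.
exists (#|S|%:R); split; first exact: ler0n.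
exists 1; split=> // m; rewrite mul1r -natrX ler_nat; exact: ncount_le.
Qed.

Lemma Gset_lb L : lbound (Gset L) 0.
Proof. by move=> x [] . Qed.

Lemma growth_ge0 L : 0 <= growth S R L.
Proof. exact: lb_le_inf (Gset_ne L) (@Gset_lb L). Qed.

Lemma growth_le L l c : 0 <= l -> 0 < c ->
  (forall m, (ncount L m)%:R <= c * l ^+ m) -> growth S R L <= l.
Proof.
move=> l0 c0 H; apply: (ge_inf (E := Gset L)); last by split=> //; exists c.
by exists 0; exact: Gset_lb.
Qed.

Lemma le_growth L x :
  (forall l c, 0 <= l -> 0 < c -> (forall m, (ncount L m)%:R <= c * l ^+ m) -> x <= l) ->
  x <= growth S R L.
Proof.
move=> H; apply: lb_le_inf (Gset_ne L) _ => l [l0 [c [c0 Hc]]]; exact: H Hc.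
Qed.

Lemma growth_lt L t : growth S R L < t ->
  exists c, 0 < c /\ forall m, (ncount L m)%:R <= c * t ^+ m.
Proof.
move=> /(inf_lt (Gset_ne L)) [l [l0 [c [c0 Hc]]] lt].
exists c; split=> // m; apply: (le_trans (Hc m)); rewrite ler_pM2l //.
apply: lerXn2r; rewrite ?nnegrE //; last exact: ltW.
exact: le_trans (ltW lt).
Qed.

End GrowthFacts.

Section Comb.
Variables (S : finType) (bar : S -> S).
Implicit Types (L : set (seq S)).

Definition Ws L m : seq (seq S) :=
  [seq tval t | t <- enum [set t : m.-tuple S | `[< L (tval t) >]]].

Lemma size_Ws L m : size (Ws L m) = ncount L m.
Proof. by rewrite size_map /ncount cardE. Qed.

Lemma Ws_uniq L m : uniq (Ws L m).
Proof. by rewrite map_inj_uniq ?enum_uniq //; exact: val_inj. Qed.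

Lemma mem_Ws L m s : s \in Ws L m <-> size s = m /\ L s.
Proof.
split.
  case/mapP=> t; rewrite mem_enum inE => /asboolP Lt ->; split=> //.
  exact: size_tuple.
case=> hs Ls; have hs' : size s == m by apply/eqP.
apply/mapP; exists (Tuple hs') => //; rewrite mem_enum inE; exact/asboolP.
Qed.

Definition fw (w b : seq S) := w ++ b ++ wbar S bar w.

Lemma size_fw w b : size (fw w b) = (size w + (size b + size w))%N.
Proof. by rewrite /fw /wbar !size_cat size_rev size_map. Qed.

Lemma count_lower (R1 B1 H1 : set (seq S)) n k :
  (forall w b, R1 w -> B1 b -> H1 (fw w b)) ->
  (ncount R1 n * ncount B1 k <= ncount H1 (n.*2 + k))%N.
Proof.
move=> H; rewrite -!size_Ws -(size_allpairs fw).
apply: uniq_leq_size.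
  apply: allpairs_uniq; try exact: Ws_uniq.
  move=> [w1 b1] [w2 b2] /allpairsP [[x1 y1] /= [/mem_Ws [s1 _] /mem_Ws [t1 _] [-> ->]]].
  move=> /allpairsP [[x2 y2] /= [/mem_Ws [s2 _] /mem_Ws [t2 _] [-> ->]]] /=.
  rewrite /fw => /eqP; rewrite eqseq_cat ?s1 ?s2 // => /andP [/eqP ex].
  by rewrite eqseq_cat ?t1 ?t2 // => /andP [/eqP ey _]; rewrite ex ey.
move=> h /allpairsP [[w b] /= [/mem_Ws [sw Rw] /mem_Ws [sb Bb] ->]].
apply/mem_Ws; split; last exact: H.
rewrite size_fw sw sb; lia.
Qed.

Lemma count_upper (I : finType) (P : pred I) (R_ B_ : I -> set (seq S))
  (H1 : set (seq S)) N :
  (forall h, H1 h -> size h = N ->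
     exists i w b, [/\ P i, R_ i w, B_ i b & h = fw w b]) ->
  (ncount H1 N <= \sum_(i <- enum P) \sum_(n <- iota 0 N.+1 | (n.*2 <= N)%N)
        ncount (R_ i) n * ncount (B_ i) (N - n.*2))%N.
Proof.
move=> H.
pose L0 := [seq (i, n) | i <- enum P, n <- [seq n <- iota 0 N.+1 | (n.*2 <= N)%N]].
pose F (p : I * nat) :=
  [seq fw w b | w <- Ws (R_ p.1) p.2, b <- Ws (B_ p.1) (N - p.2.*2)].
rewrite -size_Ws.
apply: (leq_trans (uniq_leq_size (s2 := flatten (map F L0)) (Ws_uniq _ _) _)).
  move=> h /mem_Ws [sh Hh]; have [i [w [b [Pi Rw Bb eh]]]] := H h Hh sh.
  have sz : size h = (size w + (size b + size w))%N by rewrite eh size_fw.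
  apply/flattenP; exists (F (i, size w)).
    apply: map_f; apply/allpairsP; exists (i, size w); split => //.
      by rewrite mem_enum.
    rewrite mem_filter mem_iota /=; apply/andP; split; lia.
  rewrite eh; apply/allpairsP; exists (w, b) => /=; split=> //.
    exact/mem_Ws.
  by apply/mem_Ws; split=> //=; lia.
rewrite size_flatten /shape -map_comp sumnE big_map big_allpairs.
rewrite leq_eqVlt; apply/orP; left; apply/eqP; apply: eq_bigr => i _.
rewrite big_filter; apply: eq_bigr => n _ /=.
by rewrite size_allpairs !size_Ws.
Qed.

Lemma ncount_pos L w : L w -> (0 < ncount L (size w))%N.
Proof.
move=> Lw; rewrite -size_Ws.
have : w \in Ws L (size w) by apply/mem_Ws.
by case: (Ws L (size w)).
Qed.

End Comb.

Section Wbar.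
Variables (S : finType) (bar : S -> S).
Lemma wbar_cat u v : wbar S bar (u ++ v) = wbar S bar v ++ wbar S bar u.
Proof. by rewrite /wbar map_cat rev_cat. Qed.
Lemma wbar_cons a u : wbar S bar (a :: u) = wbar S bar u ++ [:: bar a].
Proof. by rewrite -cat1s wbar_cat. Qed.
Lemma wbarK : involutive bar -> involutive (wbar S bar).
Proof. by move=> Hb w; rewrite /wbar map_rev revK -map_comp map_id_in // => x _ /=. Qed.
Lemma size_wbar u : size (wbar S bar u) = size u.
Proof. by rewrite /wbar size_rev size_map. Qed.
Lemma dstar_cat (Q : Type) (d : Q -> S -> Q) p u v :
  dstar d p (u ++ v) = dstar d (dstar d p u) v.
Proof. exact: foldl_cat. Qed.
End Wbar.

Section Auto.
Variables (S : finType) (bar : S -> S) (Hbar : involutive bar).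
Variables (Q1 Q2 : finType) (d1 : Q1 -> S -> Q1) (d2 : Q2 -> S -> Q2).
Variables (q01 : Q1) (q02 : Q2) (F1 : {set Q1}) (F2 : {set Q2}).
Variables (kappa : nat) (Hkappa : (0 < kappa)%N).

Local Notation St' := (St Q1 Q2 kappa).
Local Notation arcS := (@Defs.arc S bar Q1 Q2 d1 d2 q01 q02 F1 F2 kappa).
Local Notation arcAS := (@arcA S bar Q1 Q2 d1 d2 q01 q02 F1 F2 kappa).
Local Notation runS := (@run S Q1 Q2 kappa).
Local Notation accS := (@accessible S bar Q1 Q2 d1 d2 q01 q02 F1 F2 kappa).
Local Notation coaccS := (@coaccessible S bar Q1 Q2 d1 d2 q01 q02 F1 F2 kappa).
Local Notation wb := (wbar S bar).

Lemma run_cat ar (x y : St') u v :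
  runS ar x (u ++ v) y <-> exists z, runS ar x u z /\ runS ar z v y.
Proof.
elim: u x => [|a u IH] x /=.
  by split=> [H|[z [-> H]]] //; exists x.
split.
  by move=> [z [Hz /IH [z' [H1 H2]]]]; exists z'; split=> //; exists z.
by move=> [z' [[z [Hz H1]] H2]]; exists z; split=> //; apply/IH; exists z'.
Qed.

Lemma run_mono (ar1 ar2 : St' -> S -> St' -> Prop) x w y :
  (forall x a y, ar1 x a y -> ar2 x a y) -> runS ar1 x w y -> runS ar2 x w y.
Proof.
move=> H; elim: w x => [|a w IH] x //= [z [H1 H2]]; exists z; split; auto.
Qed.

Lemma runA_run x w y : runS arcAS x w y -> runS (@Defs.arc S bar Q1 Q2 d1 d2 q01 q02 F1 F2 kappa) x w y.
Proof. by apply: run_mono => ? ? ? [_ [_ ?]]. Qed.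

Lemma acc_step x a z : accS x -> arcS x a z -> accS z.
Proof.
move=> [i [w [Hi Hr]]] Ha; exists i, (w ++ [:: a]); split=> //.
by apply/run_cat; exists x; split=> //=; exists z.
Qed.

Lemma coacc_back x w y : coaccS y -> runS arcS x w y -> coaccS x.
Proof.
move=> [f [v [Hf Hr]]] Hxy; exists f, (w ++ v); split=> //.
by apply/run_cat; exists y.
Qed.

Lemma upgrade x w y : accS x -> coaccS y -> runS arcS x w y -> runS arcAS x w y.
Proof.
elim: w x => [|a w IH] x /=; first by [].
move=> Ax Cy [z [Hz Hr]].
have Az := acc_step Ax Hz.
exists z; split; last exact: IH.
have Cx : coaccS x by apply: (coacc_back (w := a :: w)) Cy _; exists z.
have Cz : coaccS z by exact: coacc_back Cy Hr.
by split; [split | split; [split|]].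
Qed.

Lemma run_P x w y : runS arcS x w y ->
  stP y = (dstar d1 (stP x).1 w, dstar d2 (stP x).2 w).
Proof.
elim: w x => [|a w IH] x /=; first by move=> ->; case: (stP y).
by move=> [z [[_ [_ [Pz _]]] /IH ->]]; rewrite Pz.
Qed.

Lemma run_q x w y : runS arcS x w y ->
  stq1 x = dstar d1 (stq1 y) (wb w) /\ stq2 x = dstar d2 (stq2 y) (wb w).
Proof.
elim: w x => [|a w IH] x /=; first by move=> ->.
move=> [z [[_ [_ [_ [e1 [e2 _]]]]] /IH [f1 f2]]].
by rewrite wbar_cons !dstar_cat e1 e2 f1 f2.
Qed.

Lemma run_l x w y : runS arcS x w y -> (1 <= stl x)%N ->
  stl y = (stl x + size w)%N.
Proof.
elim: w x => [|a w IH] x /=; first by move=> -> _; rewrite addn0.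
move=> [z [[_ [_ [_ [_ [_ H]]]]] Hr]] l1.
case: H => [[l0 _ _ _]|[l0 _ _]|[_ _ lz]]; try by rewrite l0 in l1.
by rewrite (IH z Hr) lz ?addSnnS //.
Qed.

Lemma run_split x w y : runS arcS x w y -> stl x = 0%N -> stl y = kappa ->
  exists g a z, [/\ w = g ++ a, size a = kappa, runS arcS x g z,
     (stq1 z \in F1) || (stq2 z \in F2) & runS arcS z a y].
Proof.
elim: w x => [|b w IH] x /=.
  move=> -> l0 lk; have : (0 < stl y)%N by rewrite lk.
  by rewrite l0.
move=> [z [Hz Hr]] l0 lk; have Hz' := Hz.
case: Hz => [_ [_ [_ [_ [_ H]]]]].
case: H => [[_ lz0 _ _]|[_ lz1 Hq]|[l1 _ _]]; last by rewrite l0 in l1.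
  have [g [a [z' [e sa r1 hq r2]]]] := IH z Hr lz0 lk.
  exists (b :: g), a, z'; split=> //; [by rewrite e | by exists z].
exists [::], (b :: w), x; split=> //.
have := run_l Hr; rewrite lz1 lk => /(_ isT) ->; by rewrite add1n.
by exists z.
Qed.

Variables (L1 L2 : set (seq S)).
Hypothesis HA1 : forall w, L1 w <-> dstar d1 q01 w \in F1.
Hypothesis HA2 : forall w, dstar d2 q02 w \in F2 <->
                   exists2 v, L2 v & w = wbar S bar v.

Local Notation inMS := (@inM S bar Q1 Q2 d1 d2 q01 q02 F1 F2 kappa).
Local Notation RmuS := (Rmu S bar Q1 Q2 d1 d2 q01 q02 F1 F2 kappa).
Local Notation BmuS := (Bmu S bar Q1 Q2 d1 d2 kappa).
Local Notation HkS := (Hk S bar kappa L1 L2).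

Lemma sound mu w b : inMS mu -> RmuS mu w -> BmuS mu b ->
  HkS (w ++ b ++ wb w).
Proof.
case: mu => I F [[_ [_ [PI lI]]] [_ [_ lF]]] /= Hr [Hb1 Hb2].
have Hr' := runA_run Hr.
have [g [a [z [ew sa r1 hq r2]]]] := run_split Hr' lI lF.
have [e1 e2] := run_q r2.
have eP := run_P Hr'; rewrite PI /= in eP.
rewrite eP /= in Hb1 Hb2.
subst w.
exists g, a, b; split; first by rewrite wbar_cat !catA.
split; first by rewrite sa.
case/orP: hq => [hq|hq].
  left; apply/HA1.
  have -> : g ++ a ++ b ++ wb a = ((g ++ a) ++ b) ++ wb a by rewrite !catA.
  by rewrite (@dstar_cat _ _ d1 q01 ((g ++ a) ++ b)) (@dstar_cat _ _ d1 q01 (g ++ a)) Hb1 -e1.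
right; move: hq; rewrite e2 -Hb2 -!dstar_cat => /HA2 [v Lv ev].
have -> : a ++ b ++ wb a ++ wb g = v.
  by rewrite -(wbarK Hbar v) -ev !wbar_cat !(wbarK Hbar) !catA.
exact: Lv.
Qed.

Lemma wb_mid c u : wb (c :: u ++ [:: bar c]) = c :: wb u ++ [:: bar c].
Proof.
by rewrite -cat1s !wbar_cat /wbar /= Hbar.
Qed.

Lemma complete h : HkS h -> exists mu w b,
  [/\ inMS mu, RmuS mu w, BmuS mu b & h = w ++ b ++ wb w].
Proof.
move=> [g0 [a0 [b0 [eh [ka Hl]]]]].
pose G := g0 ++ a0.
have eh' : h = G ++ b0 ++ wb G by rewrite eh /G wbar_cat !catA.
have x0 : S.
  have : (0 < size a0)%N by apply: leq_trans Hkappa ka.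
  case E: a0 => [|x a'] //; move=> _; exact x.
pose Pw i := take i G.
pose Mw i := drop i G ++ b0 ++ wb (drop i G).
pose D i := (dstar d1 q01 (Pw i ++ Mw i) \in F1) ||
            (dstar d2 q02 (Pw i ++ wb (Mw i)) \in F2).
have sG : size G = (size g0 + size a0)%N by rewrite size_cat.
have Dg0 : D (size g0).
  rewrite /D /Pw /Mw /G take_size_cat // drop_size_cat //.
  case: Hl => [/HA1 -> //|L2v]; apply/orP; right; apply/HA2.
  exists (a0 ++ b0 ++ wb a0 ++ wb g0) => //.
  by rewrite !wbar_cat !(wbarK Hbar) !catA.
have exP : exists i, (i <= size G) && D i.
  by exists (size g0); rewrite Dg0 sG leq_addr.
case: (ex_minnP exP) => i0 /andP [i0G Di0] i0min.
have i0g : (i0 <= size g0)%N by apply: i0min; rewrite Dg0 sG leq_addr.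
pose n := (i0 + kappa)%N.
have nG : (n <= size G)%N by rewrite /n sG; lia.
pose lev i := if (i <= i0)%N then 0%N else (i - i0)%N.
have levk i : (i <= n)%N -> (lev i < kappa.+1)%N.
  by rewrite /lev /n; case: ifP => _; lia.
pose X i : St' := ((((dstar d1 q01 (Pw i), dstar d2 q02 (Pw i)),
                   dstar d1 q01 (Pw i ++ Mw i)),
                   dstar d2 q02 (Pw i ++ wb (Mw i))), inord (lev i)).
have lX i : (i <= n)%N -> stl (X i) = lev i.
  by move=> H; rewrite /stl /X /= inordK // levk.
have stX i : isState bar d1 d2 q01 q02 (X i).
  split; first by exists (Pw i).
  by exists (Mw i); split; rewrite /stP /stq1 /stq2 /= dstar_cat.
have PwS i : (i < size G)%N -> Pw i.+1 = Pw i ++ [:: nth x0 G i].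
  by move=> H; rewrite /Pw (take_nth x0 H) cats1.
have MwS i : (i < size G)%N ->
    Mw i = nth x0 G i :: Mw i.+1 ++ [:: bar (nth x0 G i)].
  move=> H; rewrite /Mw (drop_nth x0 H) wbar_cons /=.
  by rewrite !catA.
have arcX i : (i < n)%N -> arcS (X i) (nth x0 G i) (X i.+1).
  move=> Hi; have HiG : (i < size G)%N by apply: leq_trans nG.
  split; first exact: stX.
  split; first exact: stX.
  split; first by rewrite /stP /= PwS // !dstar_cat.
  split.
    rewrite /stq1 /= (MwS i HiG) (PwS i HiG) -cat1s !catA.
    by rewrite (@dstar_cat _ _ d1 q01 _ [:: bar _]).
  split.
    rewrite /stq2 /= (MwS i HiG) (PwS i HiG) wb_mid -cat1s !catA.
    by rewrite (@dstar_cat _ _ d2 q02 _ [:: bar _]).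
  rewrite (lX i (ltnW Hi)) (lX i.+1 Hi) /lev.
  case: (ltngtP i i0) => Hii0.
  - have nD : ~~ D i.
      apply/negP => Di; have := i0min i.
      rewrite Di andbT (leq_trans (ltnW Hii0) i0G) => /(_ isT).
      by rewrite leqNgt Hii0.
    move: nD; rewrite /D negb_or => /andP [n1 n2].
    by apply: Or31; split.
  - by apply: Or33; split; lia.
    by subst i; apply: Or32; split; [done | lia | exact: Di0].
have sPw : size (Pw n) = n by rewrite /Pw size_takel.
have runX k : (k <= n)%N -> runS arcS (X (n - k)%N) (drop (n - k) (Pw n)) (X n).
  elim: k => [_|k IH Hk].
    by rewrite subn0 drop_oversize ?sPw.
  have Hi : (n - k.+1 < n)%N by lia.
  rewrite (drop_nth x0) ?sPw // /Pw nth_take //.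
  have -> : (n - k.+1).+1 = (n - k)%N by lia.
  exists (X (n - k)%N); split; last by apply: IH; lia.
  have := arcX _ Hi; have -> : (n - k.+1).+1 = (n - k)%N by lia.
  by [].
have r0 : runS arcS (X 0%N) (Pw n) (X n).
  by have := runX n (leqnn n); rewrite subnn drop0.
have init0 : initialS bar d1 d2 q01 q02 (X 0%N).
  split; first exact: stX.
  by split; [rewrite /stP /= /Pw take0 | rewrite lX // /lev leq0n].
have finn : finalS bar d1 d2 q01 q02 (X n).
  split; first exact: stX.
  rewrite lX // /lev /n; case: ifP => H; last lia.
  by move: H Hkappa; rewrite -{2}(addn0 i0) leq_add2l; case: kappa.
have acc0 : accS (X 0%N) by exists (X 0%N), [::].
have coaccn : coaccS (X n) by exists (X n), [::].
have accn : accS (X n) by exists (X 0%N), (Pw n).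
have coacc0 : coaccS (X 0%N) := coacc_back coaccn r0.
exists (X 0%N, X n), (Pw n), (Mw n); split.
- by split; split=> //; split.
- exact: upgrade acc0 coaccn r0.
- by split; rewrite /stP /stq1 /stq2 /= dstar_cat.
- rewrite eh' /Pw /Mw -[in LHS](cat_take_drop n G) wbar_cat !catA //.
Qed.

Lemma B_ne mu : inMS mu -> exists w, BmuS mu w.
Proof. by case: mu => I F [_ [_ [[_ [w Hw]] _]]]; exists w. Qed.

Lemma R_ne mu : inMS mu -> exists mu' w,
  [/\ inMS mu', mu'.2 = mu.2 & RmuS mu' w].
Proof.
case: mu => I F [_ [[[i [w [Hi Hr]]] CF] HF]].
have Ci : coaccS i := coacc_back CF Hr.
have Ai : accS i by exists i, [::].
exists (i, F), w; split=> //=.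
  split; first by split=> //; split.
  by split=> //; split=> //; exists i, w.
by apply: upgrade => //; exists i, w.
Qed.

End Auto.

Unset Implicit Arguments. Set Strict Implicit.

Section PolyExp.
Local Open Scope ring_scope.
Lemma poly_exp (R : realType) (s t : R) : 0 < s -> s < t ->
  exists E, 0 < E /\ forall N : nat, N.+1%:R * s ^+ N <= E * t ^+ N.
Proof.
move=> s0 st.
pose q := t / s.
have q1 : 1 < q by rewrite /q ltr_pdivlMr // mul1r.
pose e := q - 1.
have e0 : 0 < e by rewrite /e subr_gt0.
have bern N : 1 + N%:R * e <= q ^+ N.
  elim: N => [|N IH]; first by rewrite mul0r addr0 expr0.
  rewrite exprS -natr1.
  have hN : 0 <= (N%:R : R) := ler0n _ _.
  have : q * (1 + N%:R * e) <= q * q ^+ N by rewrite ler_wpM2l // ltW // (lt_trans ltr01).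
  have h3 : 0 <= N%:R * ((q - 1) * (q - 1)) by rewrite mulr_ge0 // mulr_ge0 // subr_ge0 ltW.
  rewrite /e in IH * => H; nra.
pose f := Num.min 1 e.
have f0 : 0 < f by rewrite lt_min ltr01 e0.
have f1 : f <= 1 by rewrite ge_min lexx.
have fe : f <= e by rewrite ge_min lexx orbT.
exists f^-1; split; first by rewrite invr_gt0.
move=> N.
have h1 : N.+1%:R * f <= q ^+ N.
  apply: le_trans (bern N); rewrite -natr1 mulrDl mul1r.
  have hN : 0 <= (N%:R : R) := ler0n _ _.
  have : N%:R * f <= N%:R * e by rewrite ler_wpM2l.
  lra.
have h2 : N.+1%:R * s ^+ N * f <= t ^+ N.
  rewrite mulrAC.
  apply: le_trans (ler_wpM2r (exprn_ge0 _ (ltW s0)) h1) _.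
  by rewrite -exprMn /q divfK ?gt_eqF.
by rewrite [f^-1 * _]mulrC ler_pdivlMr.
Qed.

End PolyExp.

Local Open Scope ring_scope.

Theorem lemma13 (R : realType) (S : finType) (bar : S -> S)
  (Hbar : involutive bar) (HS : (1 < #|S|)%N)
  (kappa : nat) (Hkappa : (0 < kappa)%N)
  (L1 L2 : set (seq S))
  (Q1 Q2 : finType) (d1 : Q1 -> S -> Q1) (d2 : Q2 -> S -> Q2)
  (q01 : Q1) (q02 : Q2) (F1 : {set Q1}) (F2 : {set Q2})
  (HA1 : forall w, L1 w <-> dstar d1 q01 w \in F1)
  (HA2 : forall w, dstar d2 q02 w \in F2 <->
                   exists2 v, L2 v & w = wbar S bar v)
  (HL1 : forall w, L1 w -> exists u alpha v : seq S,
           size alpha = kappa /\ w = u ++ alpha ++ v ++ wbar S bar alpha)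
  (HL2 : forall w, L2 w -> exists alpha v u : seq S,
           size alpha = kappa /\ w = alpha ++ v ++ wbar S bar alpha ++ u) :
  let sigma := maxM S bar Q1 Q2 d1 d2 q01 q02 F1 F2 kappa R
                 (fun mu => growth S R (Bmu S bar Q1 Q2 d1 d2 kappa mu)) in
  let rho := maxM S bar Q1 Q2 d1 d2 q01 q02 F1 F2 kappa R
               (fun mu => growth S R
                            (Rmu S bar Q1 Q2 d1 d2 q01 q02 F1 F2 kappa mu)) in
  let eta := growth S R (Hk S bar kappa L1 L2) in
  eta = Num.max sigma (Num.sqrt rho).
Proof.
move=> sigma rho eta.
pose P := fun mu : St Q1 Q2 kappa * St Q1 Q2 kappa =>
  `[< inM bar d1 d2 q01 q02 F1 F2 mu >].
pose HH := Hk S bar kappa L1 L2.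
pose RR := Rmu S bar Q1 Q2 d1 d2 q01 q02 F1 F2 kappa.
pose BB := Bmu S bar Q1 Q2 d1 d2 kappa.
have Hlow : forall mu, inM bar d1 d2 q01 q02 F1 F2 mu -> forall n k,
    (ncount (RR mu) n * ncount (BB mu) k <= ncount HH (n.*2 + k))%N.
  move=> mu Hm n k; apply: (count_lower (bar := bar)) => w b Rw Bb.
  exact: (sound Hbar Hkappa HA1 HA2 Hm Rw Bb).
have Hup : forall N, (ncount HH N <= \sum_(mu <- enum P)
     \sum_(n <- iota 0 N.+1 | (n.*2 <= N)%N)
        ncount (RR mu) n * ncount (BB mu) (N - n.*2))%N.
  move=> N; apply: (count_upper (bar := bar)) => h Hh _.
  have [mu [w [b [Hm Rw Bb eh]]]] := complete Hbar Hkappa HA1 HA2 Hh.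
  by exists mu, w, b; split => //; apply/asboolP.
have sig0 : 0 <= sigma.
  rewrite /sigma /maxM; elim/big_ind: _ => // [x y hx hy|mu _].
    by rewrite le_max hx.
  exact: growth_ge0.
have rho0 : 0 <= rho.
  rewrite /rho /maxM; elim/big_ind: _ => // [x y hx hy|mu _].
    by rewrite le_max hx.
  exact: growth_ge0.
have eta0 : 0 <= eta := growth_ge0 _ _.
have sigB : forall mu, inM bar d1 d2 q01 q02 F1 F2 mu ->
    growth S R (BB mu) <= sigma.
  by move=> mu Hm; rewrite /sigma /maxM; apply: le_bigmax_cond; apply/asboolP.
have rhoR : forall mu, inM bar d1 d2 q01 q02 F1 F2 mu ->
    growth S R (RR mu) <= rho.
  by move=> mu Hm; rewrite /rho /maxM; apply: le_bigmax_cond; apply/asboolP.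
have low1 : sigma <= eta.
  rewrite /sigma /maxM; apply: bigmax_le => // mu /asboolP Hm.
  have [mu' [w [Hm' e2 Rw]]] := R_ne Hm.
  have eB : BB mu' = BB mu by rewrite /BB /Bmu e2.
  have n0 := ncount_pos Rw.
  apply: le_growth => l c l0 c0 Hc.
  apply: (growth_le (c := c * l ^+ (size w).*2 + 1)) => //.
    by rewrite ltr_wpDl // mulr_ge0 // ?exprn_ge0 // ltW.
  move=> k.
  apply: (le_trans (y := (ncount HH ((size w).*2 + k))%:R)).
    rewrite ler_nat; have := Hlow _ Hm' (size w) k; rewrite eB.
    by apply: leq_trans; exact: leq_pmull.
  apply: le_trans (Hc _) _; rewrite exprD mulrA ler_wpM2r ?exprn_ge0 //.
  by rewrite lerDl.
have low2 : Num.sqrt rho <= eta.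
  suff h : rho <= eta ^+ 2.
    by rewrite -(ger0_norm eta0) -sqrtr_sqr ler_sqrt // exprn_ge0.
  rewrite /rho /maxM; apply: bigmax_le => [|mu /asboolP Hm].
    exact: exprn_ge0.
  have [b Hb] := B_ne Hm.
  have k0 := ncount_pos Hb.
  have gR0 := growth_ge0 R (RR mu).
  suff h : Num.sqrt (growth S R (RR mu)) <= eta.
    rewrite -(sqr_sqrtr gR0); apply: lerXn2r; rewrite ?nnegrE ?sqrtr_ge0 //.
  apply: le_growth => l c l0 c0 Hc.
  have h : growth S R (RR mu) <= l ^+ 2.
    apply: (growth_le (c := c * l ^+ (size b) + 1)); first exact: exprn_ge0.
      by rewrite ltr_wpDl // mulr_ge0 // ?exprn_ge0 // ltW.
    move=> n.
    apply: (le_trans (y := (ncount HH (n.*2 + size b))%:R)).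
      rewrite ler_nat; apply: leq_trans (Hlow _ Hm _ _).
      by rewrite leq_pmulr.
    apply: le_trans (Hc _) _; rewrite exprD -exprM mul2n mulrA mulrAC.
    by rewrite ler_wpM2r ?exprn_ge0 // lerDl.
  by rewrite -(ger0_norm l0) -sqrtr_sqr ler_sqrt // exprn_ge0.
have up : eta <= Num.max sigma (Num.sqrt rho).
  set m := Num.max _ _.
  have m0 : 0 <= m by rewrite le_max sig0.
  suff H : forall t, m < t -> eta <= t.
    rewrite leNgt; apply/negP => lt.
    have [h1 h2] := midf_lt lt.
    by have := H _ h1; rewrite leNgt h2.
  move=> t mt.
  have [ms st] := midf_lt mt.
  set s := (m + t) / 2 in ms st.
  have s0 : 0 < s by apply: le_lt_trans ms.
  have Hcd : forall mu, exists cd : R * R, inM bar d1 d2 q01 q02 F1 F2 mu ->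
      [/\ 0 < cd.1, 0 < cd.2,
          (forall k, (ncount (BB mu) k)%:R <= cd.1 * s ^+ k) &
          (forall n, (ncount (RR mu) n)%:R <= cd.2 * (s ^+ 2) ^+ n)].
    move=> mu; case: (pselect (inM bar d1 d2 q01 q02 F1 F2 mu)) => Hm;
      last by exists (1, 1).
    have [c1 [c10 Hc1]] : exists c, 0 < c /\
        forall k, (ncount (BB mu) k)%:R <= c * s ^+ k.
      apply: growth_lt; apply: le_lt_trans (sigB _ Hm) _.
      by apply: le_lt_trans ms; rewrite le_max lexx.
    have [c2 [c20 Hc2]] : exists c, 0 < c /\
        forall n, (ncount (RR mu) n)%:R <= c * (s ^+ 2) ^+ n.
      apply: growth_lt; apply: le_lt_trans (rhoR _ Hm) _.
      have sr : Num.sqrt rho < s.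
        by apply: le_lt_trans ms; rewrite le_max lexx orbT.
      rewrite -(sqr_sqrtr rho0); have := sqrtr_ge0 rho; nra.
    by exists (c1, c2).
  case: (choice Hcd) => cd Hcd'.
  have [E [E0 HE]] := @poly_exp R s t s0 st.
  pose K := \sum_(mu <- enum P) (cd mu).1 * (cd mu).2.
  have K0 : 0 <= K.
    rewrite /K big_seq; apply: sumr_ge0 => mu; rewrite mem_enum => /asboolP Hm.
    by have [h1 h2 _ _] := Hcd' mu Hm; rewrite mulr_ge0 // ltW.
  apply: (growth_le (c := K * E + 1)); first exact: ltW (le_lt_trans m0 mt).
    by rewrite ltr_wpDl // mulr_ge0 // ltW.
  move=> N.
  have main : (ncount HH N)%:R <= K * (N.+1%:R * s ^+ N).
    apply: (le_trans (y := (\sum_(mu <- enum P)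
       \sum_(n <- iota 0 N.+1 | (n.*2 <= N)%N)
        ncount (RR mu) n * ncount (BB mu) (N - n.*2))%:R)).
      by rewrite ler_nat.
    rewrite natr_sum /K mulr_suml big_seq [X in _ <= X]big_seq.
    apply: ler_sum => mu; rewrite mem_enum => /asboolP Hm.
    have [h1 h2 hB hR] := Hcd' mu Hm.
    rewrite natr_sum big_mkcond /=.
    apply: (le_trans (y := \sum_(n <- iota 0 N.+1) (cd mu).1 * (cd mu).2 * s ^+ N)).
      apply: ler_sum => n _; case: ifP => c; last first.
        by apply: mulr_ge0; [apply: mulr_ge0; exact: ltW | exact: exprn_ge0 (ltW s0)].
      rewrite natrM.
      apply: le_trans (ler_pM (ler0n _ _) (ler0n _ _) (hR n) (hB _)) _.
      rewrite -exprM mul2n.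
      have -> : (cd mu).1 * (cd mu).2 * s ^+ N =
          (cd mu).2 * s ^+ n.*2 * ((cd mu).1 * s ^+ (N - n.*2)).
        by rewrite -[in LHS](subnKC c) exprD; ring.
      by [].
    rewrite big_const_seq count_predT size_iota iter_addr_0.
    by rewrite -mulr_natr le_eqVlt; apply/orP; left; apply/eqP; ring.
  apply: le_trans main _.
  apply: le_trans (ler_wpM2l K0 (HE N)) _.
  rewrite mulrA mulrDl mul1r lerDl exprn_ge0 //.
  by apply: ltW; apply: le_lt_trans mt.
apply/eqP; rewrite eq_le up /=.
by rewrite ge_max low1 low2.
Qed.
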